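(* Let $a\in\mathcal A_2$ with $|a|=1$, $a\ne\pm1$, be written as $a=\cos\theta+v\,e_1e_2\sin\theta=\exp(\theta\,v\,e_1e_2)$ with $\theta\in(0,\pi)$, $v\in\mathcal A_2^{(0,1)}$, $|v|=1$. Let $\rho_a:\mathcal A_2^{(0,1)}\to\mathcal A_2^{(0,1)}$, $\rho_a(x)=a\,x\,(a')^{-1}$. Then $\rho_a\in\mathrm{SO}(3)$, $v$ is an eigenvector of $\rho_a$ with eigenvalue $1$, and $\rho_a$ is the rotation of angle $2\theta$ about $v$, i.e. its restriction to the orthogonal complement $v^\perp$ is the rotation by angle $2\theta$ with respect to the orientation of $v^\perp$ induced by $v$.
   Context: $\mathcal A_2$ is the real associative algebra generated by $e_1,e_2$ with $e_1^2=e_2^2=-1$, $e_1e_2=-e_2e_1$, with Euclidean norm in the basis $1,e_1,e_2,e_1e_2$. The main involution is $(a_0+a_1e_1+a_2e_2+a_{12}e_1e_2)'=a_0-a_1e_1-a_2e_2+a_{12}e_1e_2$. $\mathcal A_2^{(0,1)}=\mathbb R+\mathbb Re_1+\mathbb Re_2$ is regarded as Euclidean 3-space oriented by the ordered basis $(1,e_1,e_2)$; for a unit vector $v$, the plane $v^\perp$ is oriented so that a basis $(w_1,w_2)$ of $v^\perp$ is positive iff $(v,w_1,w_2)$ is a positive basis of $\mathcal A_2^{(0,1)}$. *)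

(* Defs.v *)
From HB Require Import structures.
From mathcomp Require Import all_boot all_order all_algebra.
From mathcomp Require Import reals trigo.
Set Implicit Arguments. Unset Strict Implicit. Unset Printing Implicit Defensive.
Import Order.TTheory GRing.Theory Num.Theory.
Local Open Scope ring_scope.

(* The algebra A_2: elements a0 + a1 e1 + a2 e2 + a12 e1e2. *)
Record A2 (R : realType) := mkA2 { c0 : R; c1 : R; c2 : R; c12 : R }.

Section A2ops.
Variable R : realType.
Implicit Types x y : A2 R.

Definition A2add x y := mkA2 (c0 x + c0 y) (c1 x + c1 y) (c2 x + c2 y) (c12 x + c12 y).
Definition A2scale (k : R) x := mkA2 (k * c0 x) (k * c1 x) (k * c2 x) (k * c12 x).
Definition A2real (k : R) : A2 R := mkA2 k 0 0 0.
Definition A2one : A2 R := A2real 1.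
Definition e1 : A2 R := mkA2 0 1 0 0.
Definition e2 : A2 R := mkA2 0 0 1 0.

(* Multiplication determined by e1^2 = e2^2 = -1, e1 e2 = - e2 e1,
   extended bilinearly (basis products: e1 e12 = -e2, e12 e1 = e2,
   e2 e12 = e1, e12 e2 = -e1, e12 e12 = -1). *)
Definition A2mul x y :=
  mkA2 (c0 x * c0 y - c1 x * c1 y - c2 x * c2 y - c12 x * c12 y)
       (c0 x * c1 y + c1 x * c0 y + c2 x * c12 y - c12 x * c2 y)
       (c0 x * c2 y + c2 x * c0 y - c1 x * c12 y + c12 x * c1 y)
       (c0 x * c12 y + c12 x * c0 y + c1 x * c2 y - c2 x * c1 y).

Definition e12 : A2 R := A2mul e1 e2.

Definition A2norm x := Num.sqrt (c0 x ^+ 2 + c1 x ^+ 2 + c2 x ^+ 2 + c12 x ^+ 2).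

Definition invol x := mkA2 (c0 x) (- c1 x) (- c2 x) (c12 x).

Definition A2inv x :=
  A2scale (A2norm x ^+ 2)^-1 (mkA2 (c0 x) (- c1 x) (- c2 x) (- c12 x)).

(* A_2^{(0,1)} = R + R e1 + R e2, coordinates w.r.t. the ordered basis (1,e1,e2) *)
Definition A2vec (x : 'rV[R]_3) : A2 R := mkA2 (x 0 0) (x 0 1) (x 0 2%:R) 0.

Definition dot3 (x y : 'rV[R]_3) : R := \sum_(i < 3) x 0 i * y 0 i.

Definition mat3 (u v w : 'rV[R]_3) : 'M[R]_3 :=
  \matrix_(i < 3, j < 3)
    (if (i : nat) == 0%N then u 0 j else if (i : nat) == 1%N then v 0 j else w 0 j).

Definition positive_basis (u v w : 'rV[R]_3) : Prop := 0 < \det (mat3 u v w).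

Definition A2rho (a x : A2 R) : A2 R := A2mul (A2mul a x) (A2inv (invol a)).

End A2ops.

(* Main.v *)
Require Import Defs.
From HB Require Import structures.
From mathcomp Require Import all_boot all_order all_algebra.
From mathcomp Require Import reals trigo.
From mathcomp Require Import ring lra.
Import Order.TTheory GRing.Theory Num.Theory.
Local Open Scope ring_scope.
Set Implicit Arguments. Unset Strict Implicit. Unset Printing Implicit Defensive.

Lemma l20 : lift (ord0 : 'I_2) ord0 = 1 :> 'I_2. Proof. by apply: val_inj. Qed.
Lemma l21 : lift (1 : 'I_2) ord0 = 0 :> 'I_2. Proof. by apply: val_inj. Qed.
Lemma l30 : lift (ord0:'I_3) ord0 = 1. Proof. by apply: val_inj. Qed.
Lemma l31 : lift (ord0:'I_3) (1:'I_2) = 2%:R. Proof. by apply: val_inj. Qed.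
Lemma l32 : lift (1:'I_3) ord0 = 0. Proof. by apply: val_inj. Qed.
Lemma l33 : lift (1:'I_3) 1 = 2%:R. Proof. by apply: val_inj. Qed.
Lemma l34 : lift (2%:R:'I_3) ord0 = 0. Proof. by apply: val_inj. Qed.
Lemma l35 : lift (2%:R:'I_3) 1 = 1. Proof. by apply: val_inj. Qed.
Lemma o3 : (ord0 : 'I_3) = 0. Proof. by apply: val_inj. Qed.
Lemma o2 : (ord0 : 'I_2) = 0. Proof. by apply: val_inj. Qed.
Ltac normI := rewrite ?l20 ?l21 ?o2 ?l30 ?l31 ?l32 ?l33 ?o3 ?l34 ?l35 ?l30 ?l31 ?l32 ?l33 ?o3.

Lemma sum3 (R : nmodType) (F : 'I_3 -> R) : \sum_(i < 3) F i = F 0 + F 1 + F 2%:R.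
Proof. rewrite !big_ord_recl big_ord0; normI. by rewrite addr0 addrA. Qed.

Lemma det3 (R : comNzRingType) (A : 'M[R]_3) : \det A =
  A 0 0 * (A 1 1 * A 2%:R 2%:R - A 1 2%:R * A 2%:R 1)
 - A 0 1 * (A 1 0 * A 2%:R 2%:R - A 1 2%:R * A 2%:R 0)
 + A 0 2%:R * (A 1 0 * A 2%:R 1 - A 1 1 * A 2%:R 0).
Proof.
rewrite (expand_det_row _ ord0) !big_ord_recl big_ord0 /cofactor.
rewrite !(expand_det_row _ ord0) !big_ord_recl !big_ord0 /cofactor.
rewrite !(expand_det_row _ ord0) !big_ord_recl !big_ord0 /cofactor.
rewrite !det_mx00 !mxE /=. normI. rewrite /bump /=. ring.
Qed.

Section Main.
Variable R : realType.

Definition fM (C S D v0 v1 v2 : R) (i j : nat) : R :=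
  match i, j with
  | 0, 0 => C + D * v0 * v0
  | 0, 1 => S * v2 + D * v0 * v1
  | 0, _ => - S * v1 + D * v0 * v2
  | 1, 0 => - S * v2 + D * v1 * v0
  | 1, 1 => C + D * v1 * v1
  | 1, _ => S * v0 + D * v1 * v2
  | _, 0 => S * v1 + D * v2 * v0
  | _, 1 => - S * v0 + D * v2 * v1
  | _, _ => C + D * v2 * v2
  end.

Definition mM C S D v0 v1 v2 : 'M[R]_3 := \matrix_(i < 3, j < 3) fM C S D v0 v1 v2 i j.

Lemma v1E : nat_of_ord (1 : 'I_3) = 1%N. Proof. by []. Qed.
Lemma v2E : nat_of_ord (2%:R : 'I_3) = 2%N. Proof. by []. Qed.
Lemma v0E : nat_of_ord (0 : 'I_3) = 0%N. Proof. by []. Qed.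

Lemma mME C S D v0 v1 v2 (x : 'rV[R]_3) :
  x *m mM C S D v0 v1 v2 = \row_(j < 3) (x 0 0 * fM C S D v0 v1 v2 0 j + x 0 1 * fM C S D v0 v1 v2 1 j + x 0 2%:R * fM C S D v0 v1 v2 2 j).
Proof.
apply/rowP => j; rewrite !mxE sum3 !mxE !v1E !v2E !v0E //.
Qed.


Definition fc (x y : 'rV[R]_3) (j : nat) : R :=
  match j with
  | 0 => x 0 1 * y 0 2%:R - x 0 2%:R * y 0 1
  | 1 => x 0 2%:R * y 0 0 - x 0 0 * y 0 2%:R
  | _ => x 0 0 * y 0 1 - x 0 1 * y 0 0
  end.
Definition cr (x y : 'rV[R]_3) : 'rV[R]_3 := \row_(j < 3) fc x y j.

Lemma det3R (A : 'M[R]_3) : \det A =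
  A 0 0 * (A 1 1 * A 2%:R 2%:R - A 1 2%:R * A 2%:R 1)
 - A 0 1 * (A 1 0 * A 2%:R 2%:R - A 1 2%:R * A 2%:R 0)
 + A 0 2%:R * (A 1 0 * A 2%:R 1 - A 1 1 * A 2%:R 0).
Proof. exact: det3. Qed.

Ltac ex3 := rewrite ?mxE ?v1E ?v2E ?v0E /=.
Lemma ordn0 (h : (0 < 3)%N) : Ordinal h = 0. Proof. by apply: val_inj. Qed.
Lemma ordn1 (h : (1 < 3)%N) : Ordinal h = 1. Proof. by apply: val_inj. Qed.
Lemma ordn2 (h : (2 < 3)%N) : Ordinal h = 2%:R. Proof. by apply: val_inj. Qed.
Ltac rowcase := apply/rowP; case => [[|[|[|?]]] ?] //; ex3; rewrite ?ordn0 ?ordn1 ?ordn2.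

Lemma L1 (x y z : 'rV[R]_3) : \det (mat3 x y z) = dot3 z (cr x y).
Proof. rewrite det3R /dot3 sum3; ex3. match goal with |- ?a = ?b => change (a = b :> R) end. ring. Qed.

Lemma L2 (x y : 'rV[R]_3) : dot3 (cr x y) (cr x y) = dot3 x x * dot3 y y - dot3 x y ^+ 2.
Proof. rewrite /dot3 !sum3; ex3. ring. Qed.

Lemma L3 (x y z : 'rV[R]_3) : \det (mat3 x y z) ^+ 2 =
  dot3 x x * (dot3 y y * dot3 z z - dot3 y z ^+ 2)
  - dot3 x y * (dot3 x y * dot3 z z - dot3 y z * dot3 x z)
  + dot3 x z * (dot3 x y * dot3 y z - dot3 y y * dot3 x z).
Proof. rewrite det3R /dot3 !sum3; ex3. match goal with |- ?a = ?b => change (a = b :> R) end. ring. Qed.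

Lemma L4 (z w : 'rV[R]_3) : dot3 (z - w) (z - w) = dot3 z z + dot3 w w - 2 * dot3 z w.
Proof. rewrite /dot3 !sum3 !mxE. ring. Qed.

Lemma L5 (x : 'rV[R]_3) : dot3 x x = 0 -> x = 0.
Proof.
rewrite /dot3 sum3 -!expr2 => /eqP.
rewrite paddr_eq0 ?addr_ge0 ?sqr_ge0 // paddr_eq0 ?sqr_ge0 //.
rewrite !sqrf_eq0 => /andP [/andP [/eqP h0 /eqP h1] /eqP h2].
apply/rowP => j; rewrite mxE; case: j => [[|[|[|j]]] Hj] //.
- by rewrite -h0; congr (x _ _); apply: val_inj.
- by rewrite -h1; congr (x _ _); apply: val_inj.
- by rewrite -h2; congr (x _ _); apply: val_inj.
Qed.

Lemma rod C S D (v x : 'rV[R]_3) :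
  x *m mM C S D (v 0 0) (v 0 1) (v 0 2%:R) = C *: x + S *: cr v x + (D * dot3 v x) *: v.
Proof. rewrite mME /dot3 sum3; rowcase; ring. Qed.

Lemma crcr (v x : 'rV[R]_3) : cr v (cr v x) = dot3 v x *: v - dot3 v v *: x.
Proof. rewrite /dot3 !sum3; rowcase; ex3; ring. Qed.

Lemma crvv (v : 'rV[R]_3) : cr v v = 0.
Proof. rowcase; ex3; ring. Qed.

End Main.

Ltac ex3 := rewrite ?mxE ?v1E ?v2E ?v0E /=.
Ltac rowcase := apply/rowP; case => [[|[|[|?]]] ?] //; ex3; rewrite ?ordn0 ?ordn1 ?ordn2.
Theorem proposition4p3 (R : realType) (a : A2 R) (theta : R) (v : 'rV[R]_3) :
  A2norm a = 1 -> a <> A2one R -> a <> A2scale (-1) (A2one R) ->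
  0 < theta < pi -> A2norm (A2vec v) = 1 ->
  a = A2add (A2real (cos theta)) (A2scale (sin theta) (A2mul (A2vec v) (e12 R))) ->
  (* rho_a maps A_2^{(0,1)} into itself and acts there by a matrix of SO(3)
     (row-vector convention: x |-> x *m M in the basis (1,e1,e2)) *)
  (exists M : 'M[R]_3,
      M *m M^T = 1%:M /\ \det M = 1 /\
      forall x : 'rV[R]_3, A2rho a (A2vec x) = A2vec (x *m M)) /\
  (* v is fixed *)
  A2rho a (A2vec v) = A2vec v /\
  (* on v^perp, oriented by v, rho_a is the rotation by 2 theta *)
  (forall w1 w2 : 'rV[R]_3,
      dot3 v w1 = 0 -> dot3 v w2 = 0 ->
      dot3 w1 w1 = 1 -> dot3 w2 w2 = 1 -> dot3 w1 w2 = 0 ->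
      positive_basis v w1 w2 ->
      A2rho a (A2vec w1) = A2vec (cos (2 * theta) *: w1 + sin (2 * theta) *: w2) /\
      A2rho a (A2vec w2) = A2vec ((- sin (2 * theta)) *: w1 + cos (2 * theta) *: w2)).
Proof.
move=> Ha _ _ _ Hv Hadef.
have Hcs : cos theta ^+ 2 + sin theta ^+ 2 = 1 := cos2Dsin2 theta.
have Hc : cos theta ^+ 2 = 1 - sin theta ^+ 2 by rewrite -Hcs addrK.
have Hvv : v 0 0 ^+ 2 + v 0 1 ^+ 2 + v 0 2%:R ^+ 2 = 1.
  move: Hv; rewrite /A2norm /A2vec /= => h.
  rewrite -[RHS](expr1n _ 2) -h sqr_sqrtr; first ring.
  by rewrite !addr_ge0 ?sqr_ge0.
have Hv0 : v 0 0 ^+ 2 = 1 - v 0 1 ^+ 2 - v 0 2%:R ^+ 2 by rewrite -Hvv; ring.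
have Hdvv : dot3 v v = 1 by rewrite /dot3 sum3 -Hvv; ring.
have Hn : A2norm (invol a) = 1 by rewrite -Ha /A2norm /=; congr (Num.sqrt _); ring.
have C2 : cos (2 * theta) = cos theta ^+ 2 *+ 2 - 1 by rewrite mulr_natl cos_mulr2n.
have S2 : sin (2 * theta) = cos theta * sin theta *+ 2 by rewrite mulr_natl sin_mulr2n.
set M := mM (cos (2 * theta)) (sin (2 * theta)) (1 - cos (2 * theta)) (v 0 0) (v 0 1) (v 0 2%:R).
have rhoM : forall x, A2rho a (A2vec x) = A2vec (x *m M).
  move=> x; rewrite /A2rho /A2inv Hn expr1n invr1 /M mME /A2vec Hadef; ex3.
  rewrite C2 S2; rewrite /A2mul /A2scale /A2add /A2real /e12 /A2vec /=.
  congr mkA2; ring: Hc Hv0.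
split.
  exists M; split; last split; last exact: rhoM.
    apply/matrixP => i j; case: i => [[|[|[|?]]] ?] //; case: j => [[|[|[|?]]] ?] //;
      rewrite !mxE sum3; ex3; ex3; rewrite C2 S2; ring: Hc Hv0.
  rewrite det3R /M; ex3; rewrite C2 S2; ring: Hc Hv0.
split.
  rewrite rhoM /M rod Hdvv crvv scaler0 addr0 mulr1 -scalerDl addrC subrK scale1r //.
move=> w1 w2 h1 h2 h11 h22 h12 hpos.
have hdet : \det (mat3 v w1 w2) = 1.
  have hsq := L3 v w1 w2; rewrite Hdvv h1 h2 h11 h22 h12 in hsq.
  have h2' : \det (mat3 v w1 w2) ^+ 2 = 1 by rewrite hsq; ring.
  move: hpos; rewrite /positive_basis => hp. nra.
have hw2 : w2 = cr v w1.
  apply/eqP; rewrite -subr_eq0; apply/eqP; apply: L5.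
  rewrite L4 L2 Hdvv h11 h1 h22 -L1 hdet; ring.
split.
  by rewrite rhoM /M rod h1 mulr0 scale0r addr0 -hw2.
rewrite rhoM /M rod h2 mulr0 scale0r addr0 hw2 crcr h1 Hdvv scale0r sub0r scale1r.
by rewrite scalerN scaleNr addrC.
Qed.
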